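(* Work in a saturated structure. Let $G$ be a definable commutative group and $v:G\to I$ a definable function into a definable totally ordered set $I$ such that $v(a+b)\ge\min\{v(a),v(b)\}$ and $v(-a)=v(a)$ for all $a,b\in G$, and $v(0)$ is the maximum of $I$ with $v(a)=v(0)$ only for $a=0$. For $r\in I$ let $B_r=\{a\in G: v(a)\ge r\}$ and $B_r^-=\{a\in G: v(a)>r\}$. Suppose that every definable subset of $G$ is a Boolean combination of translates of sets of the form $B_r$, $B_r^-$ ($r\in I$), $\{0\}$ and $G$, and that $B_r/B_r^-$ is infinite for every $r\in I$ with $r<v(0)$. Then every type-definable subgroup of $G$ is a small intersection of definable subgroups, and every definable subgroup of $G$ is finite, or equal to $G$, or contains some $B_r$ or some $B_r^-$ as a subgroup of finite index.
   Context: Small means of cardinality less than the saturation of the ambient model; type-definable means a small intersection of definable sets; definable means definable with parameters. *)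

(* Defs.v *)
(* Abstract first-order setting:
   a structure is presented by its families of definable (with parameters)
   subsets of M^n, in the style of van den Dries. *)
From mathcomp Require Import all_boot.
Set Implicit Arguments. Unset Strict Implicit. Unset Printing Implicit Defensive.

Section Definability.
Variable M : Type.

Definition tup (n : nat) := 'I_n -> M.

Definition lpart {n m : nat} (z : tup (n + m)) : tup n := fun j => z (lshift m j).
Definition rpart {n m : nat} (z : tup (n + m)) : tup m := fun k => z (rshift n k).

(* The axioms
   below hold for the definable sets of any first-order structure, and
   conversely any such system is the collection of definable sets of the
   structure M expanded by all its members. *)
Record is_structure (Def : forall n, (tup n -> Prop) -> Prop) : Prop := {
  def_ext : forall n (A B : tup n -> Prop), (forall x, A x <-> B x) -> Def n A -> Def n B;
  def_T : forall n, Def n (fun _ => True);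
  def_C : forall n A, Def n A -> Def n (fun x => ~ A x);
  def_I : forall n A B, Def n A -> Def n B -> Def n (fun x => A x /\ B x);
  def_eq : forall n (i j : 'I_n), Def n (fun x => x i = x j);
  def_const : forall n (i : 'I_n) (a : M), Def n (fun x => x i = a);
  def_subst : forall n m (s : 'I_n -> 'I_m) A, Def n A -> Def m (fun y => A (fun i => y (s i)));
  def_proj : forall n m (A : tup (n + m) -> Prop), Def (n + m) A ->
     Def n (fun x => exists z : tup (n + m), lpart z = x /\ A z)
}.

Definition Def2 (Def : forall n, (tup n -> Prop) -> Prop) n m
  (R : tup n -> tup m -> Prop) : Prop :=
  Def (n + m) (fun z => R (lpart z) (rpart z)).

Definition Def3 (Def : forall n, (tup n -> Prop) -> Prop) n m k
  (R : tup n -> tup m -> tup k -> Prop) : Prop :=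
  Def (n + m + k) (fun z => R (lpart (lpart z)) (rpart (lpart z)) (rpart z)).

End Definability.

(* Cardinals: the saturation cardinal kappa is represented by a type K.
   A type J is small iff |J| < |K|, i.e. there is no injection K -> J. *)
Definition small (K J : Type) : Prop := ~ exists f : K -> J, injective f.

Definition uncountable (K : Type) : Prop := ~ exists f : K -> nat, injective f.

Definition saturated (K M : Type) (Def : forall n, (tup M n -> Prop) -> Prop) : Prop :=
  forall n (J : Type) (F : J -> tup M n -> Prop),
    small K J -> (forall j, Def n (F j)) ->
    (forall (N : nat) (f : 'I_N -> J), exists x, forall i, F (f i) x) ->
    exists x, forall j, F j x.

Definition type_definable (K M : Type) (Def : forall n, (tup M n -> Prop) -> Prop)
  n (H : tup M n -> Prop) : Prop :=
  exists (J : Type) (D : J -> tup M n -> Prop),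
    small K J /\ (forall j, Def n (D j)) /\ (forall x, H x <-> forall j, D j x).

Record is_comm_group (X : Type) (G : X -> Prop) (add : X -> X -> X) (opp : X -> X)
  (zero : X) : Prop := {
  grp_zero : G zero;
  grp_add : forall a b, G a -> G b -> G (add a b);
  grp_opp : forall a, G a -> G (opp a);
  grp_assoc : forall a b c, G a -> G b -> G c -> add a (add b c) = add (add a b) c;
  grp_comm : forall a b, G a -> G b -> add a b = add b a;
  grp_0 : forall a, G a -> add zero a = a;
  grp_N : forall a, G a -> add (opp a) a = zero
}.

Definition subgroup (X : Type) (G : X -> Prop) (add : X -> X -> X) (opp : X -> X)
  (zero : X) (H : X -> Prop) : Prop :=
  (forall x, H x -> G x) /\ H zero /\ (forall a b, H a -> H b -> H (add a b)) /\
  (forall a, H a -> H (opp a)).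

Record is_total_order (Y : Type) (I : Y -> Prop) (le : Y -> Y -> Prop) : Prop := {
  le_refl : forall r, I r -> le r r;
  le_anti : forall r s, I r -> I s -> le r s -> le s r -> r = s;
  le_trans : forall r s t, I r -> I s -> I t -> le r s -> le s t -> le r t;
  le_total : forall r s, I r -> I s -> le r s \/ le s r
}.

Definition lt_of (Y : Type) (le : Y -> Y -> Prop) (r s : Y) : Prop := le r s /\ r <> s.

Definition ball (X Y : Type) (G : X -> Prop) (le : Y -> Y -> Prop) (v : X -> Y) (r : Y)
  : X -> Prop := fun a => G a /\ le r (v a).
Definition oball (X Y : Type) (G : X -> Prop) (le : Y -> Y -> Prop) (v : X -> Y) (r : Y)
  : X -> Prop := fun a => G a /\ lt_of le r (v a).

Definition translate (X : Type) (add : X -> X -> X) (g : X) (S : X -> Prop) : X -> Prop :=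
  fun x => exists s, S s /\ x = add g s.

Inductive bcomb (X Y : Type) (G : X -> Prop) (add : X -> X -> X) (zero : X)
  (I : Y -> Prop) (le : Y -> Y -> Prop) (v : X -> Y) : (X -> Prop) -> Prop :=
| bc_ball g r : G g -> I r -> bcomb G add zero I le v (translate add g (ball G le v r))
| bc_oball g r : G g -> I r -> bcomb G add zero I le v (translate add g (oball G le v r))
| bc_zero g : G g -> bcomb G add zero I le v (translate add g (fun x => x = zero))
| bc_G g : G g -> bcomb G add zero I le v (translate add g G)
| bc_compl A : bcomb G add zero I le v A -> bcomb G add zero I le v (fun x => G x /\ ~ A x)
| bc_union A B : bcomb G add zero I le v A -> bcomb G add zero I le v B ->
    bcomb G add zero I le v (fun x => A x \/ B x)
| bc_inter A B : bcomb G add zero I le v A -> bcomb G add zero I le v B ->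
    bcomb G add zero I le v (fun x => A x /\ B x)
| bc_ext A B : bcomb G add zero I le v A -> (forall x, A x <-> B x) ->
    bcomb G add zero I le v B.

Definition finite_pred (X : Type) (H : X -> Prop) : Prop :=
  exists (N : nat) (c : 'I_N -> X), forall x, H x -> exists i, x = c i.

Definition finite_index (X : Type) (add : X -> X -> X) (opp : X -> X)
  (H L : X -> Prop) : Prop :=
  exists (N : nat) (c : 'I_N -> X), (forall i, H (c i)) /\
    forall h, H h -> exists i, L (add h (opp (c i))).

(* Main.v *)
Require Import Defs.
From mathcomp Require Import all_boot.
From Stdlib Require Import Classical ClassicalEpsilon FunctionalExtensionality.
From Stdlib Require List.
Set Warnings "-notation-overridden".
Set Implicit Arguments. Unset Strict Implicit. Unset Printing Implicit Defensive.

Section S.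
Variables (K M : Type) (Def : forall n, (tup M n -> Prop) -> Prop).
Arguments Def : clear implicits.
Hypothesis hstr : is_structure Def.
Variables (n m : nat).
Variables (G : tup M n -> Prop) (add : tup M n -> tup M n -> tup M n)
  (opp : tup M n -> tup M n) (zero : tup M n).
Hypothesis hG : is_comm_group G add opp zero.

Local Notation X := (tup M n).
Definition sub (a b : X) := add a (opp b).

Lemma Gz : G zero. Proof. exact: (grp_zero hG). Qed.
Lemma Ga a b : G a -> G b -> G (add a b). Proof. exact: (grp_add hG). Qed.
Lemma Go a : G a -> G (opp a). Proof. exact: (grp_opp hG). Qed.
Lemma Gs a b : G a -> G b -> G (sub a b). Proof. by move=> ha hb; apply: Ga => //; apply: Go. Qed.

Ltac gG := repeat first [reflexivity | assumption | apply: Gz | apply: Gs | apply: Ga | apply: Go].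

Lemma addA a b c : G a -> G b -> G c -> add a (add b c) = add (add a b) c.
Proof. exact: (grp_assoc hG). Qed.
Lemma addC a b : G a -> G b -> add a b = add b a.
Proof. exact: (grp_comm hG). Qed.
Lemma add0 a : G a -> add zero a = a. Proof. exact: (grp_0 hG). Qed.
Lemma addr0 a : G a -> add a zero = a.
Proof. move=> ha; rewrite addC; gG; exact: add0. Qed.
Lemma addNr a : G a -> add (opp a) a = zero. Proof. exact: (grp_N hG). Qed.
Lemma addrN a : G a -> add a (opp a) = zero.
Proof. move=> ha; rewrite addC; gG; exact: addNr. Qed.
Lemma addKr a b : G a -> G b -> add (opp a) (add a b) = b.
Proof. move=> ha hb; rewrite addA; gG; rewrite addNr //; exact: add0. Qed.
Lemma addIr a b c : G a -> G b -> G c -> add a b = add a c -> b = c.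
Proof. move=> ha hb hc e; rewrite -(addKr ha hb) e; exact: addKr. Qed.
Lemma oppK a : G a -> opp (opp a) = a.
Proof.
move=> ha; apply: (@addIr (opp a)); gG.
rewrite addrN; gG; by rewrite addNr.
Qed.
Lemma opp0 : opp zero = zero.
Proof. apply: (@addIr zero); gG. rewrite addrN; gG. rewrite add0; gG. Qed.
Lemma oppD a b : G a -> G b -> opp (add a b) = add (opp a) (opp b).
Proof.
move=> ha hb; apply: (@addIr (add a b)); gG.
rewrite addrN; gG.
rewrite [add (opp a) _]addC; gG.
rewrite addA; gG. rewrite -[add (add a b) (opp b)]addA; gG.
rewrite addrN // addr0 // addrN //.
Qed.
Lemma oppB a b : G a -> G b -> opp (sub a b) = sub b a.
Proof. move=> ha hb; rewrite /sub oppD; gG. rewrite oppK // addC //; gG. Qed.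
Lemma subrr a : G a -> sub a a = zero. Proof. exact: addrN. Qed.
Lemma sub0 a : G a -> sub a zero = a. Proof. move=> ha; by rewrite /sub opp0 addr0. Qed.
Lemma sub_trans a b c : G a -> G b -> G c -> sub a c = add (sub a b) (sub b c).
Proof.
move=> ha hb hc; rewrite /sub -addA; gG. rewrite addKr; gG.
Qed.
Lemma addKs a b : G a -> G b -> sub (add a b) a = b.
Proof. move=> ha hb; rewrite /sub addC; gG. exact: addKr. Qed.
Lemma subK a b : G a -> G b -> add b (sub a b) = a.
Proof. move=> ha hb; rewrite /sub addC; gG. rewrite -addA; gG. by rewrite addNr // addr0. Qed.
Lemma subKs a b : G a -> G b -> sub (add a b) b = a.
Proof. move=> ha hb; rewrite addC //; exact: addKs. Qed.
Lemma id1 x b d : G x -> G b -> G d -> sub x (sub b d) = sub (add d x) b.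
Proof.
move=> hx hb hd; rewrite /sub -/(sub b d) oppB //.
rewrite /sub addA; gG. by rewrite (addC hx hd).
Qed.

Variables (I : tup M m -> Prop) (le : tup M m -> tup M m -> Prop).
Hypothesis hI : is_total_order I le.
Variable v : tup M n -> tup M m.
Hypothesis hvI : forall a, G a -> I (v a).
Hypothesis hvadd : forall a b, G a -> G b -> le (v a) (v (add a b)) \/ le (v b) (v (add a b)).
Hypothesis hvopp : forall a, G a -> v (opp a) = v a.
Hypothesis hvmax : forall a, G a -> le (v a) (v zero).
Hypothesis hv0 : forall a, G a -> v a = v zero -> a = zero.

Local Notation lt := (lt_of le).
Local Notation v0 := (v zero).
Local Notation B := (ball G le v).
Local Notation OB := (oball G le v).
Local Notation sgrp := (subgroup G add opp zero).

Lemma Iv0 : I v0. Proof. exact: hvI Gz. Qed.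
Lemma letr r s t : I r -> I s -> I t -> le r s -> le s t -> le r t.
Proof. exact: (le_trans hI). Qed.
Lemma lerr r : I r -> le r r. Proof. exact: (le_refl hI). Qed.
Lemma leanti r s : I r -> I s -> le r s -> le s r -> r = s. Proof. exact: (le_anti hI). Qed.
Lemma lt_le_tr r s t : I r -> I s -> I t -> lt r s -> le s t -> lt r t.
Proof.
move=> hr hs ht [h1 h2] h3; split; first exact: letr h1 h3.
move=> e; subst t; apply: h2; exact: leanti.
Qed.
Lemma le_lt_tr r s t : I r -> I s -> I t -> le r s -> lt s t -> lt r t.
Proof.
move=> hr hs ht h1 [h2 h3]; split; first exact: letr h1 h2.
move=> e; subst t; apply: h3; exact: leanti.
Qed.
Lemma lt_le r s : lt r s -> le r s. Proof. by case. Qed.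
Lemma lt_irr r : ~ lt r r. Proof. by case. Qed.
Lemma le_or_lt r s : I r -> I s -> le r s \/ lt s r.
Proof.
move=> hr hs; case: (le_total hI hr hs) => h; first by left.
case: (classic (s = r)) => e; [left; subst; exact: lerr | by right].
Qed.
Lemma lt_nle r s : I r -> I s -> lt r s -> ~ le s r.
Proof. move=> hr hs [h1 h2] h3; apply: h2; exact: leanti. Qed.

Lemma B_G r a : B r a -> G a. Proof. by case. Qed.
Lemma OB_G r a : OB r a -> G a. Proof. by case. Qed.
Lemma OB_B r a : OB r a -> B r a. Proof. by case=> h [h1 h2]. Qed.
Lemma B_mono r s a : I r -> I s -> le r s -> B s a -> B r a.
Proof. move=> hr hs h [ha h2]; split=> //; apply: letr h h2 => //; exact: hvI. Qed.
Lemma OB_mono r s a : I r -> I s -> le r s -> OB s a -> OB r a.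
Proof. move=> hr hs h [ha h2]; split=> //; apply: le_lt_tr h h2 => //; exact: hvI. Qed.
Lemma B_OB r s a : I r -> I s -> lt r s -> B s a -> OB r a.
Proof. move=> hr hs h [ha h2]; split=> //; apply: lt_le_tr h h2 => //; exact: hvI. Qed.

Lemma B_sgrp r : I r -> le r v0 -> sgrp (B r).
Proof.
move=> hr hr0; split; first exact: B_G.
split; first by split; [exact: Gz|].
split.
  move=> a b [ha h1] [hb h2]; split; gG.
  case: (hvadd ha hb) => h.
    apply: letr h1 h => //; apply: hvI; gG.
  apply: letr h2 h => //; apply: hvI; gG.
move=> a [ha h]; split; gG. by rewrite hvopp.
Qed.
Lemma OB_sgrp r : I r -> lt r v0 -> sgrp (OB r).
Proof.
move=> hr hr0; split; first exact: OB_G.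
split; first by split; [exact: Gz|].
split.
  move=> a b [ha h1] [hb h2]; split; gG.
  case: (hvadd ha hb) => h.
    apply: lt_le_tr h1 h => //; apply: hvI; gG.
  apply: lt_le_tr h2 h => //; apply: hvI; gG.
move=> a [ha h]; split; gG. by rewrite hvopp.
Qed.
Lemma B_top r a : I r -> le v0 r -> B r a -> a = zero.
Proof.
move=> hr h [ha h2]; apply: hv0 => //; apply: leanti; [exact: hvI|exact: Iv0|exact: hvmax|].
apply: letr h h2 => //; [exact: Iv0|exact: hvI].
Qed.
Lemma B_le r a : I r -> B r a -> le r v0.
Proof. move=> hr [ha h]; apply: letr h (hvmax ha) => //; [exact: hvI | exact: Iv0]. Qed.
Lemma OB_lt r a : I r -> OB r a -> lt r v0.
Proof. move=> hr [ha h]; apply: lt_le_tr h (hvmax ha) => //; [exact: hvI | exact: Iv0]. Qed.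

Lemma sg_G (Z : X -> Prop) a : sgrp Z -> Z a -> G a. Proof. by case=> h _; apply: h. Qed.
Lemma sg_0 (Z : X -> Prop) : sgrp Z -> Z zero. Proof. by case=> _ []. Qed.
Lemma sg_add (Z : X -> Prop) a b : sgrp Z -> Z a -> Z b -> Z (add a b). Proof. by case=> _ [_ [h _]]; apply: h. Qed.
Lemma sg_opp (Z : X -> Prop) a : sgrp Z -> Z a -> Z (opp a). Proof. by case=> _ [_ [_ h]]; apply: h. Qed.
Lemma sg_sub (Z : X -> Prop) a b : sgrp Z -> Z a -> Z b -> Z (sub a b).
Proof. move=> hz ha hb; apply: sg_add => //; exact: sg_opp. Qed.
Lemma sg_tr (Z : X -> Prop) a b c : sgrp Z -> G a -> G b -> G c ->
  Z (sub a b) -> Z (sub b c) -> Z (sub a c).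
Proof. move=> hz ha hb hc h1 h2; rewrite (sub_trans ha hb hc); exact: sg_add. Qed.
Lemma sg_sym (Z : X -> Prop) a b : sgrp Z -> G a -> G b -> Z (sub a b) -> Z (sub b a).
Proof. move=> hz ha hb h; rewrite -oppB //; exact: sg_opp. Qed.

Definition smallP (P : X -> Prop) (T : Type) (idx : T -> Prop) (Yf : T -> X -> Prop) (A : X -> Prop) :=
  exists t, idx t /\ exists l : list X, (forall d, List.In d l -> G d) /\
    forall a, P a -> A a -> exists d, List.In d l /\ Yf t (sub a d).
Definition Jn (T : Type) (idx : T -> Prop) (Yf : T -> X -> Prop) :=
  forall t1 t2, idx t1 -> idx t2 -> exists t3, idx t3 /\
    (forall x, Yf t1 x -> Yf t3 x) /\ (forall x, Yf t2 x -> Yf t3 x).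
Definition dich P T idx Yf A := @smallP P T idx Yf A \/ @smallP P T idx Yf (fun a => G a /\ ~ A a).

Section Gen.
Variables (P : X -> Prop) (T : Type) (idx : T -> Prop) (Yf : T -> X -> Prop).
Lemma small_mono (A A' : X -> Prop) : (forall a, P a -> A a -> A' a) ->
  smallP P idx Yf A' -> smallP P idx Yf A.
Proof.
move=> h [t [ht [l [hl hc]]]]; exists t; split=> //; exists l; split=> //.
move=> a hp ha; exact: hc (h _ hp ha).
Qed.
Lemma small_union (A A' : X -> Prop) : Jn idx Yf ->
  smallP P idx Yf A -> smallP P idx Yf A' -> smallP P idx Yf (fun a => A a \/ A' a).
Proof.
move=> hj [t1 [ht1 [l1 [hl1 hc1]]]] [t2 [ht2 [l2 [hl2 hc2]]]].
case: (hj _ _ ht1 ht2) => t3 [ht3 [h13 h23]].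
exists t3; split=> //; exists (List.app l1 l2); split.
  by move=> d /List.in_app_iff [] ?; [apply: hl1|apply: hl2].
move=> a hp [] ha.
  case: (hc1 _ hp ha) => d [hd hy]; exists d; split; [apply/List.in_app_iff; by left| exact: h13].
case: (hc2 _ hp ha) => d [hd hy]; exists d; split; [apply/List.in_app_iff; by right| exact: h23].
Qed.
Lemma small_idx (idx' : T -> Prop) A : (forall t, idx t -> idx' t) ->
  smallP P idx Yf A -> smallP P idx' Yf A.
Proof. move=> h [t [ht hh]]; exists t; split=> //; exact: h. Qed.
Lemma dich_idx (idx' : T -> Prop) A : (forall t, idx t -> idx' t) ->
  dich P idx Yf A -> dich P idx' Yf A.
Proof. move=> h [] hs; [left|right]; exact: small_idx hs. Qed.
Lemma dich_ext A A' : (forall x, A x <-> A' x) -> dich P idx Yf A -> dich P idx Yf A'.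
Proof.
move=> h [] hs; [left|right]; apply: small_mono hs => a _; first by move/h.
by move=> [ha hn]; split=> // /h.
Qed.
Lemma dich_compl A : dich P idx Yf A -> dich P idx Yf (fun a => G a /\ ~ A a).
Proof.
move=> [] hs; [right|left] => //; apply: small_mono hs => a _ [ha hn].
by apply: NNPP => hna; apply: hn.
Qed.
Lemma dich_union A A' : Jn idx Yf -> dich P idx Yf A -> dich P idx Yf A' ->
  dich P idx Yf (fun a => A a \/ A' a).
Proof.
move=> hj [] h1 [] h2.
- left; exact: small_union.
- right; apply: small_mono h2 => a _ [ha hn]; split=> // h; apply: hn; by right.
- right; apply: small_mono h1 => a _ [ha hn]; split=> // h; apply: hn; by left.
- right; apply: small_mono h1 => a _ [ha hn]; split=> // h; apply: hn; by left.
Qed.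
Lemma dich_inter A A' : Jn idx Yf -> dich P idx Yf A -> dich P idx Yf A' ->
  dich P idx Yf (fun a => A a /\ A' a).
Proof.
move=> hj [] h1 [] h2.
- left; apply: small_mono h1 => a _ []; done.
- left; apply: small_mono h1 => a _ []; done.
- left; apply: small_mono h2 => a _ []; done.
- right; apply: small_mono (small_union hj h1 h2) => a _ [ha hn].
  case: (classic (A a)) => h; [right|left]; split=> //; by [move=> h'; apply: hn|].
Qed.
Lemma dich_const A (c : Prop) : (exists t, idx t) -> (forall a, P a -> (A a <-> c)) ->
  dich P idx Yf A.
Proof.
move=> [t ht] h; case: (classic c) => hc; [right|left]; exists t; split=> //; exists nil;
 split=> // a hp ha.
  by case: ha => _ []; apply/(h _ hp).
by case: hc; apply/(h _ hp).
Qed.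
Lemma dich_sm A g t : idx t -> G g -> (forall a, A a -> Yf t (sub a g)) -> dich P idx Yf A.
Proof.
move=> ht hg h; left; exists t; split=> //; exists (g :: nil); split.
  by move=> d [] // <-.
move=> a _ ha; exists g; split; [by left| exact: h].
Qed.

Hypothesis hJ : Jn idx Yf.
Hypothesis hb1 : forall g r, G g -> I r -> dich P idx Yf (translate add g (B r)).
Hypothesis hb2 : forall g r, G g -> I r -> dich P idx Yf (translate add g (OB r)).
Hypothesis hb3 : forall g, G g -> dich P idx Yf (translate add g (fun x => x = zero)).
Hypothesis hb4 : forall g, G g -> dich P idx Yf (translate add g G).
Lemma bcomb_dich D : bcomb G add zero I le v D -> dich P idx Yf D.
Proof.
elim=> {D}.
- by move=> g r hg hr; apply: hb1.
- by move=> g r hg hr; apply: hb2.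
- by move=> g hg; apply: hb3.
- by move=> g hg; apply: hb4.
- by move=> A _ h; apply: dich_compl.
- by move=> A A' _ h1 _ h2; apply: dich_union.
- by move=> A A' _ h1 _ h2; apply: dich_inter.
- by move=> A A' _ h e; apply: dich_ext h.
Qed.
End Gen.

Lemma tr_iff g (S : X -> Prop) a : G g -> (forall s, S s -> G s) ->
  (translate add g S a <-> G a /\ S (sub a g)).
Proof.
move=> hg hS; split.
  case=> s [hs ->]; have gs := hS _ hs; split; gG; by rewrite addKs.
case=> ha hs; exists (sub a g); split=> //; by rewrite subK.
Qed.

Lemma coset_const (Xr Z : X -> Prop) d g a : sgrp Z -> (forall x, Xr x -> Z x) ->
  G d -> G g -> G a -> Xr (sub a d) ->
  (translate add g Z a <-> Z (sub d g)).
Proof.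
move=> hz hxz hd hg ha hx; have hzad := hxz _ hx.
rewrite tr_iff //; last by move=> s; apply: sg_G.
split.
  case=> _ h; apply: (@sg_tr Z d a g) => //; exact: sg_sym.
move=> h; split=> //; exact: (@sg_tr Z a d g).
Qed.

Lemma Jn_B (idx : tup M m -> Prop) : (forall t, idx t -> I t) -> Jn idx B.
Proof.
move=> hi t1 t2 h1 h2; have i1 := hi _ h1; have i2 := hi _ h2.
case: (le_total hI i1 i2) => h.
  exists t1; split=> //; split=> x hx //; exact: B_mono hx.
exists t2; split=> //; split=> x hx //; exact: B_mono hx.
Qed.

Definition PA r d := fun a => G a /\ B r (sub a d).
Lemma lemA r d D : I r -> lt r v0 -> G d -> bcomb G add zero I le v D ->
  dich (PA r d) (fun t => t = r) OB D.
Proof.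
move=> hr hr0 hd; apply: bcomb_dich.
- by move=> t1 t2 -> ->; exists r; split.
- move=> g rho hg hrho; case: (le_or_lt hrho hr) => h.
    apply: (@dich_const _ _ _ _ _ (B rho (sub d g))); first by exists r.
    move=> a [ha hx]; apply: (coset_const (Xr := B r)) => //.
      apply: B_sgrp => //; apply: letr h (lt_le hr0) => //; exact: Iv0.
    by move=> x; apply: B_mono.
  apply: (@dich_sm _ _ _ _ _ g r) => // a.
  rewrite tr_iff //; last by move=> ?; apply: B_G.
  by case=> _; apply: B_OB.
- move=> g rho hg hrho; case: (le_or_lt hr hrho) => h.
    apply: (@dich_sm _ _ _ _ _ g r) => // a.
    rewrite tr_iff //; last by move=> ?; apply: OB_G.
    by case=> _; apply: OB_mono.
  apply: (@dich_const _ _ _ _ _ (OB rho (sub d g))); first by exists r.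
  move=> a [ha hx]; apply: (coset_const (Xr := B r)) => //.
    apply: OB_sgrp => //; apply: lt_le_tr h (lt_le hr0) => //; exact: Iv0.
  by move=> x; apply: B_OB.
- move=> g hg; apply: (@dich_sm _ _ _ _ _ g r) => // a.
  rewrite tr_iff //; last by move=> ? ->; gG.
  by case=> _ ->; split; [gG|].
- move=> g hg; apply: (@dich_const _ _ _ _ _ True); first by exists r.
  move=> a [ha _]; rewrite tr_iff //; split=> // _; split; gG.
Qed.

Lemma lemB D : bcomb G add zero I le v D -> dich G I B D.
Proof.
apply: bcomb_dich.
- by apply: Jn_B.
- move=> g rho hg hrho; apply: (@dich_sm _ _ _ _ _ g rho) => // a.
  by rewrite tr_iff //; [case | move=> ?; apply: B_G].
- move=> g rho hg hrho; apply: (@dich_sm _ _ _ _ _ g rho) => // a.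
  by rewrite tr_iff //; [case=> _; apply: OB_B | move=> ?; apply: OB_G].
- move=> g hg; apply: (@dich_sm _ _ _ _ _ g v0) => //; first exact: Iv0.
  move=> a; rewrite tr_iff //; last by move=> ? ->; gG.
  case=> _ ->; split; [gG| apply: lerr; exact: Iv0].
- move=> g hg; apply: (@dich_const _ _ _ _ _ True); first by exists v0; exact: Iv0.
  move=> a ha; rewrite tr_iff //; split=> // _; split; gG.
Qed.

Definition PC r d := fun a => G a /\ OB r (sub a d).
Definition idxC R r := fun t => (t = v0 \/ List.In t R) /\ lt r t.

Lemma JnC R r : (forall t, List.In t R -> I t) -> Jn (idxC R r) B.
Proof. move=> hR; apply: Jn_B => t [[->|h] _]; [exact: Iv0|exact: hR]. Qed.

Lemma lemC D : bcomb G add zero I le v D -> exists R, (forall t, List.In t R -> I t) /\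
  forall r d, I r -> lt r v0 -> G d -> dich (PC r d) (idxC R r) B D.
Proof.
elim=> {D}.
- move=> g rho hg hrho; exists (rho :: nil); split; first by move=> t [] // <-.
  move=> r d hr hr0 hd; case: (le_or_lt hrho hr) => h.
    apply: (@dich_const _ _ _ _ _ (B rho (sub d g))); first by exists v0; split; [left|].
    move=> a [ha hx]; apply: (coset_const (Xr := OB r)) => //.
      apply: B_sgrp => //; apply: letr h (lt_le hr0) => //; exact: Iv0.
    by move=> x /OB_B; apply: B_mono.
  apply: (@dich_sm _ _ _ _ _ g rho) => //; first by split; [right; left|].
  by move=> a; rewrite tr_iff //; [case | move=> ?; apply: B_G].
- move=> g rho hg hrho; exists (rho :: nil); split; first by move=> t [] // <-.
  move=> r d hr hr0 hd; case: (le_or_lt hrho hr) => h.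
    apply: (@dich_const _ _ _ _ _ (OB rho (sub d g))); first by exists v0; split; [left|].
    move=> a [ha hx]; apply: (coset_const (Xr := OB r)) => //.
      apply: OB_sgrp => //; apply: le_lt_tr h hr0 => //; exact: Iv0.
    by move=> x; apply: OB_mono.
  apply: (@dich_sm _ _ _ _ _ g rho) => //; first by split; [right; left|].
  by move=> a; rewrite tr_iff //; [case=> _; apply: OB_B | move=> ?; apply: OB_G].
- move=> g hg; exists nil; split=> // r d hr hr0 hd.
  apply: (@dich_sm _ _ _ _ _ g v0) => //; first by split; [left|].
  move=> a; rewrite tr_iff //; last by move=> ? ->; gG.
  case=> _ ->; split; [gG| apply: lerr; exact: Iv0].
- move=> g hg; exists nil; split=> // r d hr hr0 hd.
  apply: (@dich_const _ _ _ _ _ True); first by exists v0; split; [left|].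
  move=> a [ha _]; rewrite tr_iff //; split=> // _; split; gG.
- move=> A _ [R [hR h]]; exists R; split=> // r d hr hr0 hd; apply: dich_compl; exact: h.
- move=> A A' _ [R1 [hR1 h1]] _ [R2 [hR2 h2]]; exists (List.app R1 R2).
  have hR : forall t, List.In t (List.app R1 R2) -> I t.
    by move=> t /List.in_app_iff [] ?; [apply: hR1|apply: hR2].
  split=> // r d hr hr0 hd; apply: dich_union; first exact: JnC.
    apply: dich_idx (h1 _ _ hr hr0 hd) => t [[->|ht] h]; split=> //; [by left| right; apply/List.in_app_iff; by left].
  apply: dich_idx (h2 _ _ hr hr0 hd) => t [[->|ht] h]; split=> //; [by left| right; apply/List.in_app_iff; by right].
- move=> A A' _ [R1 [hR1 h1]] _ [R2 [hR2 h2]]; exists (List.app R1 R2).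
  have hR : forall t, List.In t (List.app R1 R2) -> I t.
    by move=> t /List.in_app_iff [] ?; [apply: hR1|apply: hR2].
  split=> // r d hr hr0 hd; apply: dich_inter; first exact: JnC.
    apply: dich_idx (h1 _ _ hr hr0 hd) => t [[->|ht] h]; split=> //; [by left| right; apply/List.in_app_iff; by left].
  apply: dich_idx (h2 _ _ hr hr0 hd) => t [[->|ht] h]; split=> //; [by left| right; apply/List.in_app_iff; by right].
- move=> A A' _ [R [hR h]] e; exists R; split=> // r d hr hr0 hd; apply: dich_ext e _; exact: h.
Qed.

Definition cov (Xs Ys : X -> Prop) := exists l : list X, (forall c, List.In c l -> G c) /\
  forall x, Xs x -> exists c, List.In c l /\ Ys (sub x c).
Definition covH (Hs Ys : X -> Prop) := exists l : list X, (forall c, List.In c l -> Hs c) /\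
  forall x, Hs x -> exists c, List.In c l /\ Ys (sub x c).
Definition DE (E : X -> Prop) x := exists e1 e2, E e1 /\ E e2 /\ x = sub e1 e2.

Lemma recenter (Hs Ys : X -> Prop) l : (forall x, Hs x -> G x) -> sgrp Ys ->
  (forall c, List.In c l -> G c) ->
  (forall h, Hs h -> exists c, List.In c l /\ Ys (sub h c)) -> covH Hs Ys.
Proof.
move=> hHG hY; elim: l Hs hHG => [|c l IH] Hs hHG hl hc.
  by exists nil; split=> // h /hc [c [[]]].
have [l' [hl' hc']] : covH (fun x => Hs x /\ ~ Ys (sub x c)) Ys.
  apply: IH; first by move=> x [hx _]; apply: hHG.
    by move=> x hx; apply: hl; right.
  move=> h [hh hn]; case: (hc _ hh) => c' [[<-|hc'] hy]; first by case: hn.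
  by exists c'.
case: (classic (exists h0, Hs h0 /\ Ys (sub h0 c))) => [[h0 [hh0 hy0]]|hno].
  exists (h0 :: l'); split.
    by move=> x [<-|hx] //; case: (hl' _ hx).
  move=> h hh; case: (classic (Ys (sub h c))) => hy.
    exists h0; split; first by left.
    have gc : G c by apply: hl; left.
    apply: (@sg_tr Ys h c h0) => //; try exact: hHG.
    by apply: sg_sym => //; exact: hHG.
  case: (hc' h (conj hh hy)) => c' [hin hy']; exists c'; split=> //; by right.
exists l'; split.
  by move=> x hx; case: (hl' _ hx).
move=> h hh; case: (classic (Ys (sub h c))) => hy.
  by case: hno; exists h.
case: (hc' h (conj hh hy)) => c' [hin hy']; by exists c'.
Qed.

Lemma fi_of_list (Hs Ys : X -> Prop) l : (forall c, List.In c l -> Hs c) ->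
  (forall h, Hs h -> exists c, List.In c l /\ Ys (sub h c)) -> finite_index add opp Hs Ys.
Proof.
move=> hl hc; exists (length l), (fun i => List.nth i l zero); split.
  by move=> i; apply: hl; apply: List.nth_In; apply/ltP; exact: ltn_ord.
move=> h hh; case: (hc _ hh) => c [hin hy].
case: (List.In_nth _ _ zero hin) => k [hk e].
have hk' : (k < length l)%N by apply/ltP.
by exists (Ordinal hk'); rewrite /= e.
Qed.

Lemma big (Xs Ys E : X -> Prop) d lb : sgrp Xs -> G d -> (forall b, List.In b lb -> G b) ->
  (forall a, G a -> Xs (sub a d) -> ~ E a -> exists b, List.In b lb /\ Ys (sub a b)) ->
  ~ cov Xs Ys -> forall x, Xs x -> DE E x.
Proof.
move=> hX hd hlb hbad hnc x hx; apply: NNPP => hn; apply: hnc.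
have gx : G x by apply: sg_G hX hx.
exists (List.app (List.map (fun b => sub b d) lb) (List.map (fun b => sub (sub b d) x) lb)).
split.
  move=> c /List.in_app_iff [] /List.in_map_iff [b [<- hb]]; have gb := hlb _ hb; gG.
move=> y hy; have gy : G y by apply: sg_G hX hy.
set a1 := add d y; set a2 := add a1 x.
have g1 : G a1 by rewrite /a1; gG.
have g2 : G a2 by rewrite /a2; gG.
case: (classic (E a1)) => e1; [case: (classic (E a2)) => e2|].
- by case: hn; exists a2, a1; split=> //; split=> //; rewrite /a2 addKs.
- have : Xs (sub a2 d).
    rewrite /a2 /a1 -addA; gG. rewrite addKs; gG. exact: sg_add.
  move/(hbad _ g2) => /(_ e2) [b [hb hyb]]; have gb := hlb _ hb.
  exists (sub (sub b d) x); split.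
    apply/List.in_app_iff; right; apply/List.in_map_iff; by exists b.
  rewrite id1; gG. rewrite id1; gG.
  suff -> : add d (add x y) = a2 by [].
  rewrite /a2 /a1 -addA; gG. by rewrite (addC gx gy).
- have : Xs (sub a1 d) by rewrite /a1 addKs.
  move/(hbad _ g1) => /(_ e1) [b [hb hyb]]; have gb := hlb _ hb.
  exists (sub b d); split.
    apply/List.in_app_iff; left; apply/List.in_map_iff; by exists b.
  by rewrite id1.
Qed.

Lemma small_unionR (P1 P2 : X -> Prop) (T : Type) (idx : T -> Prop) Yf A : Jn idx Yf ->
  smallP P1 idx Yf A -> smallP P2 idx Yf A -> smallP (fun a => P1 a \/ P2 a) idx Yf A.
Proof.
move=> hj [t1 [ht1 [l1 [hl1 hc1]]]] [t2 [ht2 [l2 [hl2 hc2]]]].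
case: (hj _ _ ht1 ht2) => t3 [ht3 [h13 h23]].
exists t3; split=> //; exists (List.app l1 l2); split.
  by move=> d /List.in_app_iff [] ?; [apply: hl1|apply: hl2].
move=> a [] hp ha.
  case: (hc1 _ hp ha) => d [hd hy]; exists d; split; [apply/List.in_app_iff; by left| exact: h13].
case: (hc2 _ hp ha) => d [hd hy]; exists d; split; [apply/List.in_app_iff; by right| exact: h23].
Qed.

Lemma small_monoP (P1 P2 : X -> Prop) (T : Type) (idx : T -> Prop) Yf A :
  (forall a, P2 a -> P1 a) -> smallP P1 idx Yf A -> smallP P2 idx Yf A.
Proof.
move=> h [t [ht [l [hl hc]]]]; exists t; split=> //; exists l; split=> //.
move=> a hp ha; exact: hc (h _ hp) ha.
Qed.

Lemma small_list (Preg : X -> X -> Prop) (T : Type) (idx : T -> Prop) Yf A l t0 :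
  Jn idx Yf -> idx t0 -> (forall c, List.In c l -> smallP (Preg c) idx Yf A) ->
  smallP (fun a => exists c, List.In c l /\ Preg c a) idx Yf A.
Proof.
move=> hj ht0; elim: l => [|c l IH] h.
  by exists t0; split=> //; exists nil; split=> // a [c [[]]].
have h1 := h c (or_introl erefl).
have h2 := IH (fun c' hc' => h c' (or_intror hc')).
apply: small_monoP (small_unionR hj h1 h2) => a [c' [[<-|hin] hp]]; [by left| right; by exists c'].
Qed.

Definition cls (P : Prop) : bool := if excluded_middle_informative P then true else false.
Lemma clsP (P : Prop) : cls P = true <-> P.
Proof. rewrite /cls; case: excluded_middle_informative => //; split=> //. Qed.

Lemma count_lt (T : Type) (a1 a2 : pred T) (s : seq T) :
  (forall x, List.In x s -> a1 x -> a2 x) -> (exists x, List.In x s /\ a2 x /\ ~~ a1 x) ->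
  (count a1 s < count a2 s)%N.
Proof.
elim: s => [|y s IH] hs [x [hx [h2 h1]]] //=.
case: hx => [e|hx].
  subst y; rewrite (negbTE h1) h2 /= add0n add1n ltnS.
  elim: s {IH hs} (fun z hz => hs z (or_intror hz)) => //= z s IH' hs'.
  apply: leq_add; last by apply: IH' => w hw; apply: hs'; right.
  case e1: (a1 z) => //; by rewrite hs' //; left.
have IH' := IH (fun z hz => hs z (or_intror hz)) (ex_intro _ x (conj hx (conj h2 h1))).
case e1: (a1 y); first by rewrite (hs y (or_introl erefl) e1).
by rewrite add0n; apply: leq_trans IH' _; rewrite leq_addl.
Qed.

Hypothesis hinf : forall r, I r -> lt r v0 -> ~ finite_index add opp (B r) (OB r).

Lemma ncovB r : I r -> lt r v0 -> ~ cov (B r) (OB r).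
Proof.
move=> hr hr0 [l [hl hc]]; apply: (hinf hr hr0).
have [l' [hl' hc']] : covH (B r) (OB r).
  apply: recenter hl hc; [exact: B_G| exact: OB_sgrp].
exact: fi_of_list hl' hc'.
Qed.

Lemma sgrpG : sgrp G.
Proof. split=> //; split; first exact: Gz. split; [exact: Ga| exact: Go]. Qed.

Lemma sub_assoc a c e : G a -> G c -> G e -> sub (sub a c) e = sub a (add c e).
Proof. move=> ha hc he; rewrite /sub oppD // addA; gG. Qed.

Section Main.
Variables (E H : X -> Prop).
Hypothesis hEb : bcomb G add zero I le v E.
Hypothesis hEG : forall x, E x -> G x.
Hypothesis hH : sgrp H.
Hypothesis hHE : forall x, H x -> E x.

Definition Concl := (forall x, G x -> DE E x) \/ exists r, I r /\
  (((forall x, B r x -> DE E x) /\ covH H (B r)) \/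
   ((forall x, OB r x -> DE E x) /\ covH H (OB r))).

Lemma DE0 : DE E zero.
Proof.
have h0 : E zero by apply: hHE; apply: sg_0 hH.
exists zero, zero; split=> //; split=> //; rewrite subrr; gG.
Qed.
Lemma HG x : H x -> G x. Proof. exact: sg_G. Qed.

Lemma stageA r : I r -> covH H (B r) -> Concl \/ (lt r v0 /\ covH H (OB r)).
Proof.
move=> hr hcov; case: (le_or_lt Iv0 hr) => hlt.
  left; right; exists r; split=> //; left; split=> // x hx.
  by rewrite (B_top hr hlt hx); exact: DE0.
case: (classic Concl) => hC; first by left.
right; split=> //; case: hcov => l [hl hc].
have hs : forall c, List.In c l -> smallP (PA r c) (fun t => t = r) OB E.
  move=> c hcl; have gc : G c by apply: HG; apply: hl.
  case: (lemA hr hlt gc hEb) => // [[t [-> [lb [hlb hbad]]]]].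
  case: hC; right; exists r; split=> //; left; split; last by exists l.
  apply: (big (Xs := B r) (Ys := OB r) (d := c) (lb := lb)) => //.
  - apply: B_sgrp => //; exact: lt_le.
  - by move=> a ha hx hn; apply: hbad; split.
  - exact: ncovB.
have := small_list (Preg := PA r) (t0 := r) _ erefl hs.
case; first by move=> t1 t2 -> ->; exists r.
move=> t [-> [L [hL hcL]]].
apply: (recenter (l := L)) => //; [exact: HG| exact: OB_sgrp|].
move=> h hh; apply: hcL; last exact: hHE.
case: (hc _ hh) => c [hin hy]; exists c; split=> //; split=> //; exact: HG.
Qed.

Variables (R : list (tup M m)).
Hypothesis hR : forall t, List.In t R -> I t.
Hypothesis hC : forall r d, I r -> lt r v0 -> G d -> dich (PC r d) (idxC R r) B E.

Lemma stageC r : I r -> lt r v0 -> covH H (OB r) -> Concl \/ exists t, idxC R r t /\ covH H (B t).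
Proof.
move=> hr hlt hcov; case: (classic Concl) => hCo; first by left.
right; case: hcov => l [hl hc].
have hs : forall c, List.In c l -> smallP (PC r c) (idxC R r) B E.
  move=> c hcl; have gc : G c by apply: HG; apply: hl.
  case: (hC hr hlt gc) => // [[t [ht [lb [hlb hbad]]]]].
  case: (classic (cov (OB r) (B t))) => [[l2 [hl2 hc2]]|hnc].
    exists t; split=> //; exists (List.map (add c) l2); split.
      by move=> d /List.in_map_iff [e [<- he]]; have := hl2 _ he; gG.
    move=> a [ga ho] _; case: (hc2 _ ho) => e [he hy]; have ge := hl2 _ he.
    exists (add c e); split; first by apply/List.in_map_iff; exists e.
    by rewrite -sub_assoc.
  case: hCo; right; exists r; split=> //; right; split; last by exists l.
  apply: (big (Xs := OB r) (Ys := B t) (d := c) (lb := lb)) => //.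
  - exact: OB_sgrp.
  - by move=> a ha hx hn; apply: hbad; split.
have := small_list (Preg := PC r) (t0 := v0) (@JnC R r hR) _ hs.
case; first by split; [left|].
move=> t [ht [L [hL hcL]]].
have hcH : forall h, H h -> exists c, List.In c L /\ B t (sub h c).
  move=> h hh; apply: hcL; last exact: hHE.
  case: (hc _ hh) => c [hin hy]; exists c; split=> //; split=> //; exact: HG.
have It : I t by case: ht => [[->|hh] _]; [exact: Iv0| exact: hR hh].
exists t; split=> //.
apply: (recenter (l := L)); [exact: HG| |exact: hL|exact: hcH].
apply: B_sgrp => //; case: (hcH _ (sg_0 hH)) => c [_ hy]; exact: B_le hy.
Qed.

Definition mu r := count (fun t => cls (lt r t)) (v0 :: R).
Lemma mu_dec r t : I r -> idxC R r t -> (mu t < mu r)%N.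
Proof.
move=> hr [hin ht]; have It : I t by case: hin => [->|]; [exact: Iv0| exact: hR].
apply: count_lt.
  move=> x hx /clsP h; apply/clsP.
  have Ix : I x by case: hx => [<-|]; [exact: Iv0| exact: hR].
  exact: le_lt_tr (lt_le ht) h.
exists t; split; first by case: hin => [->|h]; [left|right].
split; first by apply/clsP.
by apply/negP => /clsP; apply: lt_irr.
Qed.

Lemma iterate N r : I r -> (mu r < N)%N -> covH H (B r) -> Concl.
Proof.
elim: N r => [//|N IH] r hr hN hcov.
case: (stageA hr hcov) => // [[hlt hcovo]].
case: (stageC hr hlt hcovo) => // [[t [ht hcovt]]].
have It : I t by case: ht => [[->|hh] _]; [exact: Iv0| exact: hR hh].
apply: (IH t It) => //; have := mu_dec hr ht; rewrite ltnS in hN.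
move=> h; exact: leq_trans h hN.
Qed.
End Main.

Lemma main (E H : X -> Prop) : bcomb G add zero I le v E -> (forall x, E x -> G x) ->
  sgrp H -> (forall x, H x -> E x) -> Concl E H.
Proof.
move=> hEb hEG hH hHE.
case: (lemC hEb) => R [hR hC].
have : Concl E H \/ exists s, I s /\ cov H (B s).
  case: (lemB hEb) => [[s [hs [L [hL hcL]]]]|[s [hs [lb [hlb hbad]]]]].
    right; exists s; split=> //; exists L; split=> // h hh; apply: hcL; [exact: (HG hH hh)| exact: hHE].
  case: (classic (cov G (B s))) => [[l2 [hl2 hc2]]|hnc].
    right; exists s; split=> //; exists l2; split=> // h hh; apply: hc2; exact: (HG hH hh).
  left; left; apply: (big (Xs := G) (Ys := B s) (d := zero) (lb := lb) sgrpG Gz hlb _ hnc).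
  by move=> a ha _ hn; apply: hbad => //; split.
case=> [//|[s [hs hcs]]].
case: hcs => l [hl hc].
have le0 : le s v0 by case: (hc _ (sg_0 hH)) => c [_ hy]; exact: B_le hy.
apply: (@iterate E H hEb hH hHE R hR hC (mu R s).+1 s hs) => //.
apply: (recenter (l := l) (fun x hx => HG hH hx) (B_sgrp hs le0) hl hc).
Qed.

Definition cat k p (x : tup M k) (y : tup M p) : tup M (k + p) :=
  fun i => match split i with inl a => x a | inr b => y b end.
Lemma split_l k p (a : 'I_k) : split (lshift p a) = inl a.
Proof. exact: (unsplitK (inl a)). Qed.
Lemma split_r k p (b : 'I_p) : split (rshift k b) = inr b.
Proof. exact: (unsplitK (inr b)). Qed.
Lemma lpart_cat k p (x : tup M k) (y : tup M p) : lpart (cat x y) = x.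
Proof. apply: functional_extensionality => a; by rewrite /lpart /cat split_l. Qed.
Lemma rpart_cat k p (x : tup M k) (y : tup M p) : rpart (cat x y) = y.
Proof. apply: functional_extensionality => a; by rewrite /rpart /cat split_r. Qed.
Lemma cat_parts k p (z : tup M (k + p)) : cat (lpart z) (rpart z) = z.
Proof.
apply: functional_extensionality => i; rewrite /cat.
have e := splitK i; case: (split i) e => [a|b] e; by rewrite -e.
Qed.

Lemma def_ext' k (A A' : tup M k -> Prop) : (forall x, A x <-> A' x) -> Def k A -> Def k A'.
Proof. exact: (def_ext hstr). Qed.
Lemma def_and k (A A' : tup M k -> Prop) : Def k A -> Def k A' -> Def k (fun x => A x /\ A' x).
Proof. exact: (def_I hstr). Qed.
Lemma def_not k (A : tup M k -> Prop) : Def k A -> Def k (fun x => ~ A x).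
Proof. exact: (def_C hstr). Qed.
Lemma def_or k (A A' : tup M k -> Prop) : Def k A -> Def k A' -> Def k (fun x => A x \/ A' x).
Proof.
move=> ha hb; apply: (def_ext' (A := fun x => ~ (~ A x /\ ~ A' x))).
  move=> x; split; [by move/not_and_or => [] /NNPP; [left|right] | by case=> h [] ].
by apply: def_not; apply: def_and; apply: def_not.
Qed.
Lemma def_True k : Def k (fun _ => True). Proof. exact: (def_T hstr). Qed.
Lemma def_pull k (A : tup M k -> Prop) N (f : 'I_k -> 'I_N) :
  Def k A -> Def N (fun Z => A (fun i => Z (f i))).
Proof. exact: (def_subst hstr). Qed.
Lemma def_ex k p (A : tup M (k + p) -> Prop) : Def (k + p) A ->
  Def k (fun x => exists y : tup M p, A (cat x y)).
Proof.
move=> h; apply: def_ext' (def_proj hstr h) => x; split.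
  by case=> z [<- hz]; exists (rpart z); rewrite cat_parts.
by case=> y hy; exists (cat x y); rewrite lpart_cat.
Qed.
Lemma def_allI p k (P : 'I_k -> tup M p -> Prop) : (forall i, Def p (P i)) ->
  Def p (fun x => forall i, P i x).
Proof.
elim: k P => [|k IH] P hP.
  apply: def_ext' (def_True p) => x; split=> // _ [] //.
apply: (def_ext' (A := fun x => P ord0 x /\ forall j : 'I_k, P (lift ord0 j) x)).
  move=> x; split; last by move=> h; split=> // j; apply: h.
  case=> h0 hj i; case: (unliftP ord0 i) => [j ->|->] //.
by apply: def_and => //; apply: IH.
Qed.
Lemma def_pt k (c : tup M k) : Def k (fun x => x = c).
Proof.
apply: (def_ext' (A := fun x => forall i, x i = c i)).
  move=> x; split; last by move=> ->.
  by move=> h; apply: functional_extensionality.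
apply: def_allI => i; exact: (def_const hstr).
Qed.

Definition s2 k p N (f1 : 'I_k -> 'I_N) (f2 : 'I_p -> 'I_N) : 'I_(k + p) -> 'I_N :=
  fun i => match split i with inl a => f1 a | inr b => f2 b end.
Lemma s2_l k p N (f1 : 'I_k -> 'I_N) (f2 : 'I_p -> 'I_N) (Z : tup M N) :
  lpart (fun i => Z (s2 f1 f2 i)) = (fun i => Z (f1 i)).
Proof. apply: functional_extensionality => a; by rewrite /lpart /s2 split_l. Qed.
Lemma s2_r k p N (f1 : 'I_k -> 'I_N) (f2 : 'I_p -> 'I_N) (Z : tup M N) :
  rpart (fun i => Z (s2 f1 f2 i)) = (fun i => Z (f2 i)).
Proof. apply: functional_extensionality => a; by rewrite /rpart /s2 split_r. Qed.

Hypothesis hGdef : Def n G.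
Hypothesis haddef : Def3 Def (fun a b c => G a /\ G b /\ c = add a b).
Hypothesis hledef : Def2 Def (fun r s => I r /\ I s /\ le r s).
Hypothesis hvdef : Def2 Def (fun a r => G a /\ r = v a).

Lemma def_add3 N (f1 f2 f3 : 'I_n -> 'I_N) : Def N (fun Z =>
  G (fun i => Z (f1 i)) /\ G (fun i => Z (f2 i)) /\
  (fun i => Z (f3 i)) = add (fun i => Z (f1 i)) (fun i => Z (f2 i))).
Proof.
have h := def_pull (s2 (s2 f1 f2) f3) haddef.
apply: def_ext' h => Z; rewrite s2_l s2_r s2_l s2_r //.
Qed.
Lemma def_v2 N (f1 : 'I_n -> 'I_N) (f2 : 'I_m -> 'I_N) : Def N (fun Z =>
  G (fun i => Z (f1 i)) /\ (fun i => Z (f2 i)) = v (fun i => Z (f1 i))).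
Proof.
have h := def_pull (s2 f1 f2) hvdef.
apply: def_ext' h => Z; rewrite s2_l s2_r //.
Qed.
Lemma def_le2 N (f1 f2 : 'I_m -> 'I_N) : Def N (fun Z =>
  I (fun i => Z (f1 i)) /\ I (fun i => Z (f2 i)) /\ le (fun i => Z (f1 i)) (fun i => Z (f2 i))).
Proof.
have h := def_pull (s2 f1 f2) hledef.
apply: def_ext' h => Z; rewrite s2_l s2_r //.
Qed.

Lemma def_B r : I r -> Def n (B r).
Proof.
move=> hr.
have h2 : Def (n + m + m) (fun w => rpart w = r /\
   (I (rpart w) /\ I (rpart (lpart w)) /\ le (rpart w) (rpart (lpart w)))).
  apply: def_and.
    by apply: def_ext' (def_pull (fun i => rshift (n + m) i) (def_pt r)) => w.
  by apply: def_ext' (def_le2 (fun i => rshift (n + m) i) (fun i => lshift m (rshift n i))) => w.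
have h1 : Def (n + m) (fun z => (G (lpart z) /\ rpart z = v (lpart z)) /\
   exists y : tup M m, rpart (cat z y) = r /\ (I (rpart (cat z y)) /\ I (rpart (lpart (cat z y)))
     /\ le (rpart (cat z y)) (rpart (lpart (cat z y))))).
  by apply: def_ext' (def_and (def_v2 (fun i => lshift m i) (fun i => rshift n i)) (def_ex h2)) => z.
apply: def_ext' (def_ex h1) => a; rewrite /=; split.
  case=> y; rewrite lpart_cat rpart_cat => [[[ga e] [y2]]].
  rewrite lpart_cat !rpart_cat => [[e2 [_ [_ hle]]]].
  by split=> //; rewrite -e -e2.
case=> ga hle; exists (v a); rewrite lpart_cat rpart_cat; split=> //.
exists r; rewrite lpart_cat !rpart_cat; split=> //; split=> //; split=> //; exact: hvI.
Qed.

Lemma def_OB r : I r -> Def n (OB r).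
Proof.
move=> hr.
have h2 : Def (n + m + m) (fun w => rpart w = r /\
   (I (rpart w) /\ I (rpart (lpart w)) /\ le (rpart w) (rpart (lpart w)))).
  apply: def_and.
    by apply: def_ext' (def_pull (fun i => rshift (n + m) i) (def_pt r)) => w.
  by apply: def_ext' (def_le2 (fun i => rshift (n + m) i) (fun i => lshift m (rshift n i))) => w.
have h1 : Def (n + m) (fun z => ((G (lpart z) /\ rpart z = v (lpart z)) /\
   exists y : tup M m, rpart (cat z y) = r /\ (I (rpart (cat z y)) /\ I (rpart (lpart (cat z y)))
     /\ le (rpart (cat z y)) (rpart (lpart (cat z y))))) /\ ~ rpart z = r).
  by apply: def_ext' (def_and (def_and (def_v2 (fun i => lshift m i) (fun i => rshift n i)) (def_ex h2))
   (def_not (def_pull (fun i => rshift n i) (def_pt r)))) => z.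
apply: def_ext' (def_ex h1) => a; rewrite /=; split.
  case=> y; rewrite lpart_cat rpart_cat => [[[[ga e] [y2]]]].
  rewrite lpart_cat !rpart_cat => [[e2 [_ [_ hle]]]] hne.
  split=> //; split; first by rewrite -e -e2.
  by move=> e3; apply: hne; rewrite e -e3 -e2 /rpart; apply: functional_extensionality.
case=> ga [hle hne]; exists (v a); rewrite lpart_cat rpart_cat; split; last first.
  move=> e; apply: hne; rewrite -e; by apply: functional_extensionality.
split=> //; exists r; rewrite lpart_cat !rpart_cat; split=> //; split=> //; split=> //; exact: hvI.
Qed.

Lemma def_tr (Xr : X -> Prop) c : G c -> Def n Xr -> (forall x, Xr x -> G x) ->
  Def n (fun x => G x /\ Xr (sub x c)).
Proof.
move=> gc hX hXG.
have h3 : Def (n + n + n) (fun Z => rpart Z = c /\ (G (rpart Z) /\ G (rpart (lpart Z)) /\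
    lpart (lpart Z) = add (rpart Z) (rpart (lpart Z)))).
  apply: def_and.
    by apply: def_ext' (def_pull (fun i => rshift (n + n) i) (def_pt c)) => w.
  by apply: def_ext' (def_add3 (fun i => rshift (n + n) i) (fun i => lshift n (rshift n i))
     (fun i => lshift n (lshift n i))) => w.
have h2 : Def (n + n) (fun z => Xr (rpart z) /\ exists w : X, rpart (cat z w) = c /\
   (G (rpart (cat z w)) /\ G (rpart (lpart (cat z w))) /\
    lpart (lpart (cat z w)) = add (rpart (cat z w)) (rpart (lpart (cat z w))))).
  by apply: def_ext' (def_and (def_pull (fun i => rshift n i) hX) (def_ex h3)) => z.
apply: def_ext' (def_ex h2) => x; split.
  case=> y; rewrite rpart_cat => [[hy [w]]]; rewrite !lpart_cat !rpart_cat => [[-> [_ [gy ->]]]].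
  split; gG; by rewrite addKs.
case=> gx hx; exists (sub x c); rewrite rpart_cat; split=> //.
exists c; rewrite !lpart_cat !rpart_cat; split=> //; split=> //; split; gG.
by rewrite subK.
Qed.

Lemma def_Sl (Xr : X -> Prop) l : (forall c, List.In c l -> G c) -> Def n Xr ->
  (forall x, Xr x -> G x) -> Def n (fun x => G x /\ exists c, List.In c l /\ Xr (sub x c)).
Proof.
move=> hl hX hXG; elim: l hl => [|c l IH] hl.
  apply: def_ext' (def_not (def_True n)) => x; split=> //; by case=> _ [c [[]]].
have gc : G c by apply: hl; left.
have := def_or (def_tr gc hX hXG) (IH (fun c' h => hl c' (or_intror h))).
apply: def_ext' => x; split.
  case=> [[gx hx]|[gx [c' [hin hx]]]]; split=> //; [exists c; split=> //; by left|].
  by exists c'; split=> //; right.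
case=> gx [c' [[<-|hin] hx]]; [left|right] => //; split=> //; by exists c'.
Qed.

Lemma addACA a b c d : G a -> G b -> G c -> G d ->
  add (add a b) (add c d) = add (add a c) (add b d).
Proof.
move=> ha hb hc hd; rewrite -addA; gG. rewrite (addA hb hc hd) (addC hb hc) -addA; gG.
rewrite addA; gG.
Qed.
Lemma subDD x y c1 c2 : G x -> G y -> G c1 -> G c2 ->
  sub (add x y) (add c1 c2) = add (sub x c1) (sub y c2).
Proof. move=> hx hy h1 h2; rewrite /sub oppD // addACA; gG. Qed.
Lemma subNN x c : G x -> G c -> sub (opp x) (opp c) = opp (sub x c).
Proof. move=> hx hc; rewrite /sub oppD; gG. Qed.
Lemma DE_sg (Hs : X -> Prop) x : sgrp Hs -> DE Hs x -> Hs x.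
Proof. move=> h [e1 [e2 [h1 [h2 ->]]]]; exact: sg_sub. Qed.

Lemma finish (E H D Xr : X -> Prop) :
  (forall x y z w, E x -> E y -> E z -> G w -> add w z = add x y -> D w) ->
  (forall x, E x -> G x) -> (forall x, H x -> E x) -> sgrp H -> sgrp Xr -> Def n Xr ->
  (forall x, Xr x -> DE E x) -> covH H Xr ->
  exists S, (Def n S /\ sgrp S) /\ (forall x, H x -> S x) /\ (forall x, S x -> D x).
Proof.
move=> hPE hEG hHE hH hX hXd hXE [l [hl hc]].
have HG x : H x -> G x by apply: sg_G.
have XG x : Xr x -> G x by apply: sg_G.
exists (fun x => G x /\ exists c, List.In c l /\ Xr (sub x c)).
split; [split|split].
- apply: def_Sl => //; move=> c /hl; exact: HG.
- split; first by move=> x [].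
  split; first by split; [exact: Gz| apply: hc; exact: sg_0].
  split.
    move=> x y [gx [c1 [i1 h1]]] [gy [c2 [i2 h2]]]; split; gG.
    have hc1 := hl _ i1; have hc2 := hl _ i2.
    have g1 := HG _ hc1; have g2 := HG _ hc2.
    case: (hc (add c1 c2) (sg_add hH hc1 hc2)) => c3 [i3 h3].
    have g3 := HG _ (hl _ i3).
    exists c3; split=> //; apply: (@sg_tr Xr _ (add c1 c2)) => //; gG.
    rewrite subDD; gG. exact: sg_add.
  move=> x [gx [c [i h]]]; split; gG; have hc1 := hl _ i; have g1 := HG _ hc1.
  case: (hc (opp c) (sg_opp hH hc1)) => c' [i' h'].
  have g3 := HG _ (hl _ i').
  exists c'; split=> //; apply: (@sg_tr Xr _ (opp c)) => //; gG.
  rewrite subNN; gG. exact: sg_opp.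
- by move=> x hx; split; [exact: HG| exact: hc].
- move=> x [gx [c [i h]]]; have hc1 := hl _ i; have gc := HG _ hc1.
  case: (hXE _ h) => e1 [e2 [h1 [h2 e]]].
  have g1 := hEG _ h1; have g2 := hEG _ h2.
  apply: (hPE c e1 e2) => //; first exact: hHE.
  have ex : x = add c (sub e1 e2) by rewrite -e subK.
  rewrite ex -addA; gG. by rewrite (addC (Gs g1 g2) g2) subK.
Qed.

Hypothesis hbc : forall D : tup M n -> Prop, Def n D -> (forall x, D x -> G x) ->
           bcomb G add zero I le v D.

Lemma part2 (H : X -> Prop) : sgrp H -> Def n H ->
     finite_pred H \/ (forall x, H x <-> G x) \/
     exists r, I r /\
       (((forall x, B r x -> H x) /\ finite_index add opp H (B r)) \/
        ((forall x, OB r x -> H x) /\ finite_index add opp H (OB r))).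
Proof.
move=> hH hD.
have HG x : H x -> G x by apply: sg_G.
case: (main (hbc hD HG) HG hH (fun x h => h)) => [hall|[r [hr [[hs [l [hl hc]]]|[hs [l [hl hc]]]]]]].
- right; left=> x; split; first exact: HG.
  by move=> gx; apply: (DE_sg hH); apply: hall.
- right; right; exists r; split=> //; left; split.
    by move=> x hx; apply: (DE_sg hH); apply: hs.
  exact: fi_of_list hl hc.
- right; right; exists r; split=> //; right; split.
    by move=> x hx; apply: (DE_sg hH); apply: hs.
  exact: fi_of_list hl hc.
Qed.

Hypothesis hsat : saturated K Def.

Definition bx (Z : tup M (n + n + n + n + n)) : X := lpart (lpart (lpart (lpart Z))).
Definition by_ (Z : tup M (n + n + n + n + n)) : X := rpart (lpart (lpart (lpart Z))).
Definition bz (Z : tup M (n + n + n + n + n)) : X := rpart (lpart (lpart Z)).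
Definition bw (Z : tup M (n + n + n + n + n)) : X := rpart (lpart Z).
Definition bu (Z : tup M (n + n + n + n + n)) : X := rpart Z.

Lemma key (H : X -> Prop) (J : Type) (Dj : J -> X -> Prop) : sgrp H -> small K J ->
  (forall j, Def n (Dj j)) -> (forall x, H x <-> forall j, Dj j x) ->
  forall D, Def n D -> (forall x, H x -> D x) ->
  exists S, (Def n S /\ sgrp S) /\ (forall x, H x -> S x) /\ (forall x, S x -> D x).
Proof.
move=> hH hsm hDj hiff D hD hHD.
have HG x : H x -> G x by apply: sg_G.
have [N [f hf]] : exists N (f : 'I_N -> J), forall x y z w u,
    (forall i, Dj (f i) x /\ Dj (f i) y /\ Dj (f i) z) ->
    (G x /\ G y /\ u = add x y) -> (G w /\ G z /\ u = add w z) -> D w.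
  apply: NNPP => hn0.
  case: (classic (exists j : J, True)) => [[j0 _]|hJ]; last first.
    apply: hn0; have f0 : 'I_0 -> J by case=> k; rewrite ltn0.
    exists 0, f0 => x y z w u _ _ [gw _]; apply: hHD; apply/hiff => j.
    by case: hJ; exists j.
  pose F j Z := Dj j (bx Z) /\ Dj j (by_ Z) /\ Dj j (bz Z) /\
    (G (bx Z) /\ G (by_ Z) /\ bu Z = add (bx Z) (by_ Z)) /\
    (G (bw Z) /\ G (bz Z) /\ bu Z = add (bw Z) (bz Z)) /\ ~ D (bw Z).
  have hF : forall j, Def (n + n + n + n + n) (F j).
    move=> j; rewrite /F.
    apply: def_and.
      by apply: def_ext' (def_pull (fun i => lshift n (lshift n (lshift n (lshift n i)))) (hDj j)) => Z.
    apply: def_and.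
      by apply: def_ext' (def_pull (fun i => lshift n (lshift n (lshift n (rshift n i)))) (hDj j)) => Z.
    apply: def_and.
      by apply: def_ext' (def_pull (fun i => lshift n (lshift n (rshift (n + n) i))) (hDj j)) => Z.
    apply: def_and.
      by apply: def_ext' (def_add3 (fun i => lshift n (lshift n (lshift n (lshift n i))))
        (fun i => lshift n (lshift n (lshift n (rshift n i)))) (fun i => rshift (n + n + n + n) i)) => Z.
    apply: def_and.
      by apply: def_ext' (def_add3 (fun i => lshift n (rshift (n + n + n) i))
        (fun i => lshift n (lshift n (rshift (n + n) i))) (fun i => rshift (n + n + n + n) i)) => Z.
    by apply: def_ext' (def_not (def_pull (fun i => lshift n (rshift (n + n + n) i)) hD)) => Z.
  have [Z hZ] : exists Z, forall j, F j Z.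
    apply: (hsat hsm hF) => N f; apply: NNPP => hn; apply: hn0; exists N, f.
    move=> x y z w u hxyz h1 h2; apply: NNPP => nd; apply: hn.
    exists (cat (cat (cat (cat x y) z) w) u) => i.
    rewrite /F /bx /by_ /bz /bw /bu !lpart_cat !rpart_cat.
    case: (hxyz i) => [? [? ?]]; do 5 (split=> //).
  have hx : H (bx Z) by apply/hiff => j; case: (hZ j).
  have hy : H (by_ Z) by apply/hiff => j; case: (hZ j) => _ [].
  have hz : H (bz Z) by apply/hiff => j; case: (hZ j) => _ [_ []].
  case: (hZ j0) => _ [_ [_ [[gx [gy e1]] [[gw [gz e2]] nd]]]].
  apply: nd; apply: hHD.
  have -> : bw Z = sub (add (bx Z) (by_ Z)) (bz Z) by rewrite -e1 e2 subKs.
  by apply: sg_sub => //; apply: sg_add.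
pose E := fun x => G x /\ forall i, Dj (f i) x.
have hEdef : Def n E by apply: def_and => //; apply: def_allI => i; exact: hDj.
have hEG : forall x, E x -> G x by move=> x [].
have hHE : forall x, H x -> E x.
  move=> x hx; split; first exact: HG.
  by move=> i; move/hiff: hx; apply.
have hPE : forall x y z w, E x -> E y -> E z -> G w -> add w z = add x y -> D w.
  move=> x y z w [gx hx] [gy hy] [gz hz] gw e.
  apply: (hf x y z w (add x y)).
  - move=> i; split; [exact: hx|split; [exact: hy|exact: hz]].
  - by split=> //; split.
  - by split=> //; split=> //; rewrite e.
have h0E : E zero by apply: hHE; apply: sg_0.
case: (main (hbc hEdef hEG) hEG hH hHE) => [hall|[r [hr [[hs hc]|[hs hc]]]]].
- exists G; split; first by split=> //; exact: sgrpG.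
  split; first exact: HG.
  move=> x gx; case: (hall _ gx) => e1 [e2 [h1 [h2 ->]]].
  have g1 := hEG _ h1; have g2 := hEG _ h2.
  apply: (hPE e1 zero e2) => //; gG.
  by rewrite (addC (Gs g1 g2) g2) subK // addr0.
- have le0 : le r v0 by case: hc => l [_ hc]; case: (hc _ (sg_0 hH)) => c [_ hy]; exact: B_le hy.
  apply: (finish hPE hEG hHE hH (B_sgrp hr le0) (def_B hr) hs hc).
- have lt0 : lt r v0 by case: hc => l [_ hc]; case: (hc _ (sg_0 hH)) => c [_ hy]; exact: OB_lt hy.
  apply: (finish hPE hEG hHE hH (OB_sgrp hr lt0) (def_OB hr) hs hc).
Qed.

Lemma part1 (H : X -> Prop) : sgrp H -> type_definable K Def H ->
     exists (J : Type) (S : J -> tup M n -> Prop),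
       small K J /\ (forall j, Def n (S j) /\ sgrp (S j)) /\
       (forall x, H x <-> forall j, S j x).
Proof.
move=> hH [J [Dj [hsm [hDj hiff]]]].
have hk : forall j, exists S, (Def n S /\ sgrp S) /\ (forall x, H x -> S x) /\ (forall x, S x -> Dj j x).
  move=> j; apply: (key hH hsm hDj hiff (hDj j)).
  by move=> x /hiff; apply.
exists J, (fun j => proj1_sig (constructive_indefinite_description _ (hk j))).
split=> //; split.
  move=> j; case: (constructive_indefinite_description _ (hk j)) => S [h _] //.
move=> x; split.
  move=> hx j; case: (constructive_indefinite_description _ (hk j)) => S [_ [h _]] /=; exact: h.
move=> h; apply/hiff => j; move: (h j).
case: (constructive_indefinite_description _ (hk j)) => S [_ [_ h']] /=; exact: h'.
Qed.
End S.

Theorem lemma3p7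
  (K M : Type) (Def : forall n, (tup M n -> Prop) -> Prop)
  (hstr : is_structure Def) (hK : uncountable K) (hsat : saturated K Def)
  (n m : nat)
  (G : tup M n -> Prop) (add : tup M n -> tup M n -> tup M n)
  (opp : tup M n -> tup M n) (zero : tup M n)
  (hG : is_comm_group G add opp zero)
  (hGdef : Def n G)
  (haddef : Def3 Def (fun a b c => G a /\ G b /\ c = add a b))
  (I : tup M m -> Prop) (le : tup M m -> tup M m -> Prop)
  (hI : is_total_order I le) (hIdef : Def m I)
  (hledef : Def2 Def (fun r s => I r /\ I s /\ le r s))
  (v : tup M n -> tup M m)
  (hvI : forall a, G a -> I (v a))
  (hvdef : Def2 Def (fun a r => G a /\ r = v a))
  (hvadd : forall a b, G a -> G b -> le (v a) (v (add a b)) \/ le (v b) (v (add a b)))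
  (hvopp : forall a, G a -> v (opp a) = v a)
  (hvmax : forall a, G a -> le (v a) (v zero))
  (hv0 : forall a, G a -> v a = v zero -> a = zero)
  (hbc : forall D : tup M n -> Prop, Def n D -> (forall x, D x -> G x) ->
           bcomb G add zero I le v D)
  (hinf : forall r, I r -> lt_of le r (v zero) ->
           ~ finite_index add opp (ball G le v r) (oball G le v r)) :
  (forall H : tup M n -> Prop, subgroup G add opp zero H -> type_definable K Def H ->
     exists (J : Type) (S : J -> tup M n -> Prop),
       small K J /\ (forall j, Def n (S j) /\ subgroup G add opp zero (S j)) /\
       (forall x, H x <-> forall j, S j x))
  /\
  (forall H : tup M n -> Prop, subgroup G add opp zero H -> Def n H ->
     finite_pred H \/ (forall x, H x <-> G x) \/
     exists r, I r /\
       (((forall x, ball G le v r x -> H x) /\ finite_index add opp H (ball G le v r)) \/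
        ((forall x, oball G le v r x -> H x) /\ finite_index add opp H (oball G le v r)))).

Proof.
split.
- move=> H hH htd.
  exact: (part1 hstr hG hI hvI hvadd hvopp hvmax hv0 hinf hGdef haddef hledef hvdef hbc hsat hH htd).
- move=> H hH hD.
  exact: (part2 hG hI hvI hvadd hvopp hvmax hv0 hinf hbc hH hD).
Qed.
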